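(* Let $\mathcal T=LI([0,1])\cup\mathcal K$ be the extension of linear arithmetic over the real interval $[0,1]$ by a unary function symbol $f$ satisfying $\mathcal K=\{\forall x,y\,(x\le y\to f(x)\le f(y)),\ \forall x\,(f(x)\le 1)\}$, with $f$ uninterpreted and the arithmetic symbols interpreted. Let $G=(a\le b)\wedge(b\le f(b))$ with constants $a,b$. Then $G\models_{\mathcal T}a\le f^n(1)$ for every $n\in\mathbb N$, and no (finite) quantifier-free formula is a $\mathcal T$-general uniform interpolant of $G$ w.r.t. $\Sigma_s\cup C_s$ with $\Sigma_s=\{f\}$, $C_s=\{a\}$.
   Context: General uniform interpolant: for a theory $\mathcal T$ whose signature splits into interpreted symbols $\Pi_0$ and uninterpreted function symbols, a quantifier-free formula $\phi$ with additional constants $C$, and sets $\Sigma_s$, $C_s$ of uninterpreted function symbols and constants occurring in $\phi$: a quantifier-free formula $\psi$ over $\Pi_0\cup\Sigma_s$ with constants only from $C_s$ is a $\mathcal T$-general uniform interpolant of $\phi$ w.r.t. $\Sigma_s\cup C_s$ if $\phi\models_{\mathcal T}\psi$ and for every ground $\theta$ sharing with $\phi$ only $\Pi_0$-symbols, symbols of $\Sigma_s$ and constants of $C_s$, $\phi\models_{\mathcal T}\theta$ implies $\psi\models_{\mathcal T}\theta$. $f^n$ denotes $n$-fold iteration of $f$. *)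

(* Defs.v *)
From HB Require Import structures.
From mathcomp Require Import all_boot all_order all_algebra.
From mathcomp Require Import reals.
Set Implicit Arguments. Unset Strict Implicit. Unset Printing Implicit Defensive.
Import Order.TTheory GRing.Theory Num.Theory.
Local Open Scope ring_scope.

Definition unit_rat := {q : rat | (0 <= q <= 1)%R}.

Inductive term : Type :=
| Cst of nat
| TNum of unit_rat
| App of term.

Record lexpr : Type := LExpr { lx_terms : seq (rat * term); lx_const : rat }.

Inductive formula : Type :=
| FTrue | FFalse
| FLe of lexpr & lexpr
| FLt of lexpr & lexpr
| FEq of lexpr & lexpr
| FNot of formula
| FAnd of formula & formula
| FOr of formula & formula.

(* Models of T = LI([0,1]) u K: the arithmetic is the standard one on [0,1],
   f is interpreted by a function [0,1] -> [0,1] satisfying K, and the free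
   constants are interpreted by elements of [0,1]. *)
Record model (R : realType) : Type := Model {
  mf : R -> R;
  mc : nat -> R;
  mf_dom : forall x, 0 <= x <= 1 -> 0 <= mf x;
  mf_le1 : forall x, 0 <= x <= 1 -> mf x <= 1;
  mf_mono : forall x y, 0 <= x <= 1 -> 0 <= y <= 1 -> x <= y -> mf x <= mf y;
  mc_dom : forall i, 0 <= mc i <= 1
}.

Fixpoint eval_term (R : realType) (M : model R) (t : term) : R :=
  match t with
  | Cst i => mc M i
  | TNum q => ratr (sval q)
  | App u => mf M (eval_term M u)
  end.

Definition eval_lexpr (R : realType) (M : model R) (e : lexpr) : R :=
  \sum_(p <- lx_terms e) ratr p.1 * eval_term M p.2 + ratr (lx_const e).

Fixpoint holds (R : realType) (M : model R) (phi : formula) : Prop :=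
  match phi with
  | FTrue => True
  | FFalse => False
  | FLe e1 e2 => eval_lexpr M e1 <= eval_lexpr M e2
  | FLt e1 e2 => eval_lexpr M e1 < eval_lexpr M e2
  | FEq e1 e2 => eval_lexpr M e1 = eval_lexpr M e2
  | FNot p => ~ holds M p
  | FAnd p q => holds M p /\ holds M q
  | FOr p q => holds M p \/ holds M q
  end.

Definition entails (R : realType) (phi psi : formula) : Prop :=
  forall M : model R, holds M phi -> holds M psi.

Fixpoint consts_term (t : term) : seq nat :=
  match t with
  | Cst i => [:: i]
  | TNum _ => [::]
  | App u => consts_term u
  end.

Definition consts_lexpr (e : lexpr) : seq nat :=
  flatten [seq consts_term p.2 | p <- lx_terms e].

Fixpoint consts (phi : formula) : seq nat :=
  match phi with
  | FTrue | FFalse => [::]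
  | FLe e1 e2 | FLt e1 e2 | FEq e1 e2 => consts_lexpr e1 ++ consts_lexpr e2
  | FNot p => consts p
  | FAnd p q | FOr p q => consts p ++ consts q
  end.

(* T-general uniform interpolant of phi w.r.t. Sigma_s u C_s, where
   Sigma_s = {f} (the only uninterpreted function symbol, so no restriction on
   function symbols is needed) and C_s is given as a list of constant indices. *)
Definition general_uniform_interpolant (R : realType)
    (phi : formula) (Cs : seq nat) (psi : formula) : Prop :=
  {subset consts psi <= Cs} /\
  entails R phi psi /\
  forall theta : formula,
    (forall i, i \in consts theta -> i \in consts phi -> i \in Cs) ->
    entails R phi theta -> entails R psi theta.

Definition lx_of (t : term) : lexpr := LExpr [:: (1%R, t)] 0%R.
Definition atom_le (t u : term) : formula := FLe (lx_of t) (lx_of u).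
Definition one_num : unit_rat := exist _ 1%R (erefl true).
Definition f_iter (n : nat) (t : term) : term := iter n App t.

(* Main.v *)
Require Import Defs.
From HB Require Import structures.
From mathcomp Require Import all_boot all_order all_algebra.
From mathcomp Require Import reals.
From mathcomp Require Import ring lra.
Set Implicit Arguments. Unset Strict Implicit. Unset Printing Implicit Defensive.
Import Order.TTheory GRing.Theory Num.Theory.
Local Open Scope ring_scope.

Definition mff (R : realType) (L m : R) (x : R) : R := if x < m then 0 else (x + L) / 2.
Definition mcc (R : realType) (L : R) (i : nat) : R := if i == 1%N then L else 1/4.

Lemma mff_dom (R : realType) (L m x : R) : 0 <= L -> 0 <= x <= 1 -> 0 <= mff L m x.
Proof. move=> hL /andP[h0 h1]; rewrite /mff; case: ifP => _; lra. Qed.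
Lemma mff_le1 (R : realType) (L m x : R) : L <= 1 -> 0 <= x <= 1 -> mff L m x <= 1.
Proof. move=> hL /andP[h0 h1]; rewrite /mff; case: ifP => _; lra. Qed.
Lemma mff_mono (R : realType) (L m x y : R) : 0 <= L -> 0 <= x -> x <= y ->
  mff L m x <= mff L m y.
Proof.
move=> hL h0 hxy; rewrite /mff; case: ifP => hx; case: ifP => hy; lra.
Qed.
Lemma mcc_dom (R : realType) (L : R) i : 0 <= L <= 1 -> 0 <= mcc L i <= 1.
Proof. move=> /andP[h0 h1]; rewrite /mcc; case: ifP => _; apply/andP; split; lra. Qed.

Definition mdl (R : realType) (L m : R) (h : 0 <= L <= 1) : model R :=
  @Model R (mff L m) (mcc L)
    (fun x hx => mff_dom m (proj1 (andP h)) hx)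
    (fun x hx => mff_le1 m (proj2 (andP h)) hx)
    (fun x y hx hy hxy => mff_mono m (proj1 (andP h)) (proj1 (andP hx)) hxy)
    (fun i => mcc_dom i h).
Arguments mdl {R} L m h.
Lemma eval_lx_of (R : realType) (M : model R) t : eval_lexpr M (lx_of t) = eval_term M t.
Proof. by rewrite /eval_lexpr /= big_cons big_nil rmorph1 rmorph0 mul1r !addr0. Qed.

Lemma eval_dom (R : realType) (M : model R) t : 0 <= eval_term M t <= 1.
Proof.
elim: t => [i|q|u IH] /=; first exact: mc_dom.
- case: q => q /andP[h0 h1] /=. rewrite ler0q h0 /=.
  by rewrite -(rmorph1 (ratr : rat -> R)) ler_rat.
- by apply/andP; split; [apply: mf_dom | apply: mf_le1].
Qed.

Lemma f_iterS n t : f_iter n.+1 t = App (f_iter n t).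
Proof. by rewrite /f_iter iterS. Qed.

Lemma part1 (R : realType) (M : model R) n :
  holds M (FAnd (atom_le (Cst 0) (Cst 1)) (atom_le (Cst 1) (App (Cst 1)))) ->
  holds M (atom_le (Cst 0) (f_iter n (TNum one_num))).
Proof.
move=> [] /=; rewrite /atom_le /= !eval_lx_of /= => hab hbf.
apply: (le_trans hab).
elim: n => [|n IH].
  by rewrite /= rmorph1; case/andP: (mc_dom M 1).
rewrite f_iterS /=; apply: (le_trans hbf); apply: mf_mono => //.
- exact: mc_dom.
- exact: eval_dom.
Qed.

Fixpoint tvals (R : realType) (M : model R) (t : term) : seq R :=
  match t with App u => eval_term M u :: tvals M u | _ => [::] end.
Definition lvals (R : realType) (M : model R) (e : lexpr) : seq R :=
  flatten [seq tvals M p.2 | p <- lx_terms e].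
Fixpoint fvals (R : realType) (M : model R) (phi : formula) : seq R :=
  match phi with
  | FTrue | FFalse => [::]
  | FLe e1 e2 | FLt e1 e2 | FEq e1 e2 => lvals M e1 ++ lvals M e2
  | FNot p => fvals M p
  | FAnd p q | FOr p q => fvals M p ++ fvals M q end.

Fixpoint nums_term (R : realType) (t : term) : seq R :=
  match t with TNum q => [:: ratr (sval q)] | App u => nums_term R u | _ => [::] end.
Definition nums_lexpr (R : realType) (e : lexpr) : seq R :=
  flatten [seq nums_term R p.2 | p <- lx_terms e].
Fixpoint nums (R : realType) (phi : formula) : seq R :=
  match phi with
  | FTrue | FFalse => [::]
  | FLe e1 e2 | FLt e1 e2 | FEq e1 e2 => nums_lexpr R e1 ++ nums_lexpr R e2
  | FNot p => nums R p
  | FAnd p q | FOr p q => nums R p ++ nums R q end.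

Lemma cat_h (T : eqType) (A B : seq T) (P : T -> Prop) :
  (forall x, x \in A ++ B -> P x) -> (forall x, x \in A -> P x) /\ (forall x, x \in B -> P x).
Proof. by move=> h; split => x hx; apply: h; rewrite mem_cat hx ?orbT. Qed.

Lemma agree_term (R : realType) (M1 M2 : model R) t :
  (forall i, mc M1 i = mc M2 i) ->
  (forall x, x \in tvals M2 t -> mf M1 x = mf M2 x) ->
  eval_term M1 t = eval_term M2 t.
Proof.
move=> hc; elim: t => [i|q|u IH] h /=; [exact: hc | by [] |].
rewrite IH; first by apply: h; rewrite inE eqxx.
by move=> x hx; apply: h; rewrite inE hx orbT.
Qed.

Lemma agree_lexpr (R : realType) (M1 M2 : model R) e :
  (forall i, mc M1 i = mc M2 i) ->
  (forall x, x \in lvals M2 e -> mf M1 x = mf M2 x) ->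
  eval_lexpr M1 e = eval_lexpr M2 e.
Proof.
move=> hc; case: e => s c; rewrite /eval_lexpr /lvals /= => h.
congr (_ + _); elim: s h => [|p s IH] h; first by rewrite !big_nil.
move: h => /= /cat_h [h1 h2].
by rewrite !big_cons (agree_term hc h1) IH.
Qed.

Lemma agree_formula (R : realType) (M1 M2 : model R) phi :
  (forall i, mc M1 i = mc M2 i) ->
  (forall x, x \in fvals M2 phi -> mf M1 x = mf M2 x) ->
  (holds M1 phi <-> holds M2 phi).
Proof.
move=> hc; elim: phi => [||e1 e2|e1 e2|e1 e2|p IH|p IHp q IHq|p IHp q IHq] /=;
  try (by move=> _; tauto);
  try (by move=> /cat_h [h1 h2]; rewrite (agree_lexpr hc h1) (agree_lexpr hc h2)).
- by move=> h; rewrite IH.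
- by move=> /cat_h [h1 h2]; rewrite IHp // IHq.
- by move=> /cat_h [h1 h2]; rewrite IHp // IHq.
Qed.

Lemma avoid_term (R : realType) (L : R) (h : 0 <= L <= 1) (hL : 1/2 < L) t :
  {subset consts_term t <= [:: 0%N]} -> L \notin nums_term R t ->
  eval_term (mdl L L h) t != L /\ L \notin tvals (mdl L L h) t.
Proof.
elim: t => [i|q|u IH] hc hn /=.
- have: i \in [:: 0%N] by apply: hc; rewrite inE eqxx.
  rewrite inE => /eqP ->; rewrite /mcc /=; split => //. by rewrite lt_eqF //; lra.
- split => //. by move: hn; rewrite inE eq_sym.
- have [h1 h2] := IH hc hn. split; last by rewrite inE negb_or eq_sym h1 h2.
  rewrite /mff. case: ifP => hv; first by rewrite lt_eqF //; lra.
  have hle : L <= eval_term (mdl L L h) u by rewrite leNgt hv.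
  have hlt : L < eval_term (mdl L L h) u by rewrite lt_neqAle eq_sym h1 hle.
  by rewrite gt_eqF //; lra.
Qed.

Lemma avoid_lexpr (R : realType) (L : R) (h : 0 <= L <= 1) (hL : 1/2 < L) e :
  {subset consts_lexpr e <= [:: 0%N]} -> L \notin nums_lexpr R e ->
  L \notin lvals (mdl L L h) e.
Proof.
case: e => s c; rewrite /consts_lexpr /nums_lexpr /lvals /=.
elim: s => [|p s IH] //= hc; rewrite !mem_cat negb_or => /andP[hn1 hn2].
rewrite negb_or; apply/andP; split.
  exact: (avoid_term h hL (t := p.2) (fun i hi => hc i ltac:(by rewrite mem_cat hi)) hn1).2.
by apply: IH => // i hi; apply: hc; rewrite mem_cat hi orbT.
Qed.

Lemma avoid_formula (R : realType) (L : R) (h : 0 <= L <= 1) (hL : 1/2 < L) phi :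
  {subset consts phi <= [:: 0%N]} -> L \notin nums R phi ->
  L \notin fvals (mdl L L h) phi.
Proof.
elim: phi => [||e1 e2|e1 e2|e1 e2|p IH|p IHp q IHq|p IHp q IHq] //= hc;
  rewrite ?mem_cat ?negb_or => hn //; try by apply: IH.
all: case/andP: hn => hn1 hn2.
all: try (by rewrite !avoid_lexpr // => i hi; apply: hc; rewrite mem_cat hi ?orbT).
all: by rewrite IHp ?IHq // => i hi; apply: hc; rewrite mem_cat hi ?orbT.
Qed.

Lemma avoid_exists (R : realType) (s : seq R) (lo hi : R) : lo < hi ->
  exists x, lo < x < hi /\ x \notin s.
Proof.
elim: s lo hi => [|a s IH] lo hi hlh.
  by exists ((lo+hi)/2); split => //; apply/andP; split; lra.
pose hi' := if (lo < a) && (a < hi) then a else hi.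
have : lo < hi' by rewrite /hi'; case: ifP => // /andP[].
case/IH => x [/andP[h1 h2] hx]; exists x; split.
  apply/andP; split => //; move: h2; rewrite /hi'; case: ifP => // /andP[_ ?] ?; lra.
rewrite inE negb_or hx andbT; move: h2; rewrite /hi'; case: ifP => [_ ?|/negbT].
  by rewrite lt_eqF.
rewrite negb_and -!leNgt => /orP[?|?] ?; apply/negP => /eqP e; rewrite e in h1; lra.
Qed.

Lemma gap_exists (R : realType) (P : seq R) (L : R) : L \notin P ->
  exists m, L < m /\ forall x, x \in P -> (x < L) || (m <= x).
Proof.
elim: P => [|a P IH] hn.
  by exists (L+1); split => //; lra.
move: hn; rewrite inE negb_or => /andP[ha hn].
have [m [hm hP]] := IH hn.
case: (ltP L a) => hLa.
- exists (Order.min m a); split; first by rewrite lt_min hm hLa.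
  move=> x; rewrite inE => /orP[/eqP ->|hx]; first by rewrite ge_min lexx !orbT.
  by case/orP: (hP x hx) => [->//|hh]; rewrite ge_min hh orbT.
- exists m; split => // x; rewrite inE => /orP[/eqP ->|/hP //].
  by rewrite lt_neqAle eq_sym ha hLa.
Qed.

Lemma orbit (R : realType) (L m : R) (h : 0 <= L <= 1) (hm : L < m) k :
  eval_term (mdl L m h) (f_iter k (TNum one_num)) = L + (1 - L) / 2 ^+ k \/
  eval_term (mdl L m h) (f_iter k (TNum one_num)) = 0.
Proof.
have hL0 : 0 <= L by case/andP: h.
elim: k => [|k IH].
  by left; rewrite /= rmorph1 expr0 divr1; lra.
rewrite f_iterS /=; case: IH => ->; rewrite /mff; case: ifP => hv; try by right.
- left; rewrite exprS; field. by rewrite expf_neq0 // pnatr_eq0.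
- exfalso; move: hv; rewrite ltNge => /negP; apply; lra.
Qed.

Lemma find_K (R : realType) (L m : R) : L < 1 -> L < m -> exists K, L + (1 - L) / 2 ^+ K < m.
Proof.
move=> h1 hm. set y := (1 - L) / (m - L).
have hy : 0 <= y by apply: divr_ge0; lra.
exists (Num.bound y). have := archi_boundP hy.
set K := Num.bound y => hyK.
have hK : (K%:R : R) <= 2 ^+ K by rewrite -natrX ler_nat ltnW // ltn_expl.
have h2 : y < 2 ^+ K by apply: lt_le_trans hK.
have hpos : 0 < 2 ^+ K :> R by rewrite exprn_gt0.
suff: (1 - L) / 2 ^+ K < m - L by lra.
rewrite ltr_pdivrMr // mulrC -ltr_pdivrMr ?subr_gt0 //.
Qed.

Lemma consts_f_iter n t : consts_term (f_iter n t) = consts_term t.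
Proof. by elim: n => [|n IH] //; rewrite f_iterS. Qed.

Local Close Scope ring_scope.

Theorem mainTheorem6 (R : realType) :
  let a := Cst 0 in
  let b := Cst 1 in
  let G := FAnd (atom_le a b) (atom_le b (App b)) in
  (forall n : nat, entails R G (atom_le a (f_iter n (TNum one_num)))) /\
  ~ (exists psi : formula, general_uniform_interpolant R G [:: 0%N] psi).
Proof.
cbv zeta; split.
  by move=> n M; apply: part1.
case=> psi [hsub [hent huni]].
have [L [/andP[hL1 hL2] hLn]] := @avoid_exists R (nums R psi) (1/2) 1 ltac:(lra).
have hLd : (0 <= L <= 1)%R by apply/andP; split; lra.
pose M' := mdl L L hLd.
have hP : L \notin fvals M' psi by apply: avoid_formula.
have [m [hm hgap]] := gap_exists hP.
pose M := mdl L m hLd.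
have [K hK] := find_K hL2 hm.
pose th := atom_le (Cst 0) (f_iter K.+1 (TNum one_num)).
have hcond : forall i, i \in consts th -> i \in consts (FAnd (atom_le (Cst 0) (Cst 1)) (atom_le (Cst 1) (App (Cst 1)))) -> i \in [:: 0%N].
  by move=> i; rewrite /th /= /consts_lexpr /= consts_f_iter /=.
have hth : entails R (FAnd (atom_le (Cst 0) (Cst 1)) (atom_le (Cst 1) (App (Cst 1)))) th.
  by move=> N; apply: part1.
have hM'G : holds M' (FAnd (atom_le (Cst 0) (Cst 1)) (atom_le (Cst 1) (App (Cst 1)))).
  rewrite /= /atom_le !eval_lx_of /= /mcc /= /mff ltxx; split; lra.
have hM'psi := hent M' hM'G.
have hag : forall x, x \in fvals M' psi -> mf M x = mf M' x.
  move=> x hx.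
  rewrite /= /mff; case/orP: (hgap x hx) => hx'.
    by rewrite hx' (lt_trans hx' hm).
  by rewrite ltNge hx' /= ltNge (le_trans (ltW hm) hx').
have hMpsi : holds M psi := proj2 (@agree_formula R M M' psi (fun i => erefl) hag) hM'psi.
have := huni th hcond hth M hMpsi.
rewrite /th /atom_le /= !eval_lx_of /= /mcc /=.
have hm0 : (0 < m)%R by lra.
case: (orbit hLd hm K) => ->; rewrite /mff ?hK ?hm0; lra.
Qed.
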